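(* Let $(Q(M))_{M\in\mathcal N}$ be a family of matrices satisfying (A1)–(A3), and let $p$ be a stochastic choice function such that $p(\cdot,\{i,j\})\bigl(I-Q(\{i,j\})\bigr)=0$ for all distinct $i,j\in X$. Fix $M\in\mathcal N$ and let $G(M)=\{(i,j)\in M\times M:\delta_{ij}(M)>0\}$ (for $(i,j)\in G(M)$ necessarily $p(j,\{i,j\})>0$). Let $D(M)$ be the $|M|\times|G(M)|$ matrix with rows indexed by $m\in M$ and columns by $(i,j)\in G(M)$, with entries $D_{m,(i,j)}=\delta_{ij}(M)/p(j,\{i,j\})$ if $m=i$, $D_{m,(i,j)}=-\delta_{ij}(M)/p(j,\{i,j\})$ if $m=j$, and $0$ otherwise, and let $\gamma(M)$ be the column vector with entries $\gamma_{(i,j)}(M)=q_{ij}(M)$, $(i,j)\in G(M)$. Then $p(\cdot,M)(I-Q(M))=0$ if and only if $D(M)\gamma(M)=0$, i.e. if and only if for every $j\in M$ $$\sum_{i:(j,i)\in G(M)}\frac{\delta_{ji}(M)\,q_{ji}(M)}{p(i,\{i,j\})}-\sum_{i:(i,j)\in G(M)}\frac{\delta_{ij}(M)\,q_{ij}(M)}{p(j,\{i,j\})}=0.$$ (If $G(M)=\emptyset$ the condition is vacuous and $p(\cdot,M)(I-Q(M))=0$ holds.)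
   Context: $X$ is a finite set of alternatives; a menu is a nonempty subset of $X$, and $\mathcal N$ denotes the set of all menus. A stochastic choice function is a map $p:X\times\mathcal N\to[0,1]$ with $\sum_{i\in M}p(i,M)=1$ and $p(i,M)=0$ for $i\notin M$; $p(\cdot,M)$ denotes the row vector $(p(i,M))_{i\in M}$. For $M\in\mathcal N$ and $i,j\in M$ let $\delta_{ij}(M)=p(i,M)\,p(j,\{i,j\})-p(i,\{i,j\})\,p(j,M)$. The family $Q(M)=(q_{ij}(M))_{i,j\in M}$, $M\in\mathcal N$, has nonnegative entries and satisfies for all $M\in\mathcal N$ and distinct $i,j\in M$: (A1) $q_{ii}(M)=1-\sum_{k\neq i}q_{ik}(M)>0$; (A2) if $q_{ij}(\{i,j\})=0$ then $q_{ji}(\{i,j\})>0$; (A3) $q_{ij}(\{i,j\})\,q_{ji}(M)=q_{ji}(\{i,j\})\,q_{ij}(M)$. *)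

(* Defs.v *)
From mathcomp Require Import all_boot all_order all_algebra.
Set Implicit Arguments. Unset Strict Implicit. Unset Printing Implicit Defensive.
Import Order.TTheory GRing.Theory Num.Theory.
Local Open Scope ring_scope.

Section Defs.
Variables (X : finType) (R : realFieldType).

Definition is_scf (p : X -> {set X} -> R) : Prop :=
  forall M : {set X}, M != set0 ->
    (forall i, 0 <= p i M <= 1) /\
    \sum_(i in M) p i M = 1 /\
    (forall i, i \notin M -> p i M = 0).

(* Q M i j = q_ij(M). Assumptions (A1)-(A3) plus nonnegativity of entries. *)
Definition QA (Q : {set X} -> X -> X -> R) : Prop :=
  forall M : {set X}, M != set0 ->
    (forall i j, i \in M -> j \in M -> 0 <= Q M i j) /\
    (forall i, i \in M ->
        Q M i i = 1 - \sum_(k in M | k != i) Q M i k /\ 0 < Q M i i) /\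
    (forall i j, i \in M -> j \in M -> i != j ->
        (Q [set i; j] i j = 0 -> 0 < Q [set i; j] j i) /\
        Q [set i; j] i j * Q M j i = Q [set i; j] j i * Q M i j).

(* p(.,M) (I - Q(M)) = 0, written out column by column (columns k in M). *)
Definition stationary (p : X -> {set X} -> R) (Q : {set X} -> X -> X -> R)
    (M : {set X}) : Prop :=
  forall k, k \in M -> \sum_(m in M) p m M * ((m == k)%:R - Q M m k) = 0.

Definition delta (p : X -> {set X} -> R) (M : {set X}) (i j : X) : R :=
  p i M * p j [set i; j] - p i [set i; j] * p j M.

Definition Gset (p : X -> {set X} -> R) (M : {set X}) : {set X * X} :=
  [set ij | [&& ij.1 \in M, ij.2 \in M & 0 < delta p M ij.1 ij.2]].

Definition Dmat (p : X -> {set X} -> R) (M : {set X}) (m : X) (ij : X * X) : R :=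
  if m == ij.1 then delta p M ij.1 ij.2 / p ij.2 [set ij.1; ij.2]
  else if m == ij.2 then - (delta p M ij.1 ij.2 / p ij.2 [set ij.1; ij.2])
  else 0.

Definition gammav (Q : {set X} -> X -> X -> R) (M : {set X}) (ij : X * X) : R :=
  Q M ij.1 ij.2.

(* D(M) gamma(M) = 0, the matrix product written out row by row (rows m in M). *)
Definition Dgamma_zero (p : X -> {set X} -> R) (Q : {set X} -> X -> X -> R)
    (M : {set X}) : Prop :=
  forall m, m \in M -> \sum_(ij in Gset p M) Dmat p M m ij * gammav Q M ij = 0.

End Defs.

(* Main.v *)
Require Import Defs.
From mathcomp Require Import all_boot all_order all_algebra.
From mathcomp Require Import ring lra.
Import Order.TTheory GRing.Theory Num.Theory.
Local Open Scope ring_scope.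

Section Aux.
Variables (X : finType) (R : realFieldType)
    (p : X -> {set X} -> R) (Q : {set X} -> X -> X -> R).
Hypotheses (Hp : is_scf p) (HQ : QA Q)
  (Hst : forall i j : X, i != j -> stationary p Q [set i; j]).

Lemma sum2 (k m : X) (F : X -> R) : k != m ->
  \sum_(i in [set k; m]) F i = F k + F m.
Proof. by move=> km; rewrite big_setU1 ?big_set1 // in_set1. Qed.

Lemma pair_key (k m : X) : k != m ->
  p k [set k; m] + p m [set k; m] = 1 /\
  0 <= p k [set k; m] /\ 0 <= p m [set k; m] /\
  p k [set k; m] * Q [set k; m] k m = p m [set k; m] * Q [set k; m] m k.
Proof.
move=> km.
have ne : [set k; m] != set0 by apply/set0Pn; exists k; rewrite !inE eqxx.
have [H1 [H2 _]] := Hp _ ne.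
have kin : k \in [set k; m] by rewrite !inE eqxx.
have min : m \in [set k; m] by rewrite !inE eqxx orbT.
have [_ [HQd _]] := HQ _ ne.
have [Hkk _] := HQd k kin.
have := @Hst k m km k kin; rewrite sum2 // eqxx eq_sym (negbTE km).
rewrite Hkk.
have -> : \sum_(l in [set k; m] | l != k) Q [set k; m] k l = Q [set k; m] k m.
  by rewrite big_mkcondr sum2 //= eqxx eq_sym km add0r.
move=> E.
move: (H1 k) (H1 m) => /andP[? _] /andP[? _].
split; first by rewrite -H2 sum2.
do 2 split => //.
move: E; rewrite /=. lra.
Qed.

Lemma set2C (k m : X) : [set m; k] = [set k; m].
Proof. by apply/setP => z; rewrite !inE orbC. Qed.

Lemma keyK (M : {set X}) (k m : X) : M != set0 -> k \in M -> m \in M -> k != m ->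
  p k [set k; m] * Q M k m = p m [set k; m] * Q M m k.
Proof.
move=> ne kM mM km.
have mk : m != k by rewrite eq_sym.
have [_ [_ HA]] := HQ _ ne.
have [A2 A3] := HA k m kM mM km.
have [A2' _] := HA m k mM kM mk.
rewrite set2C in A2'.
have [_ [Hu1 [Hu2 E]]] := pair_key _ _ km.
set a := Q [set k; m] k m in A2 A3 A2' E *.
set b := Q [set k; m] m k in A2 A3 A2' E *.
set uk := p k [set k; m] in E Hu1 Hu2 *.
set um := p m [set k; m] in E Hu1 Hu2 *.
have [b0|bn0] := eqVneq b 0.
  have apos := A2' b0.
  rewrite b0 mulr0 in E; rewrite b0 mul0r in A3.
  have uk0 : uk = 0.
    by move/eqP: E; rewrite mulf_eq0 (gt_eqF apos) orbF => /eqP.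
  have y0 : Q M m k = 0.
    by move/eqP: A3; rewrite mulf_eq0 (gt_eqF apos) /= => /eqP.
  by rewrite uk0 y0 !mul0r mulr0.
apply: (mulIf bn0).
by rewrite -mulrA [Q M k m * b]mulrC -A3 mulrA E -!mulrA [b * _]mulrC.
Qed.

Lemma pointwise (M : {set X}) (k m : X) : M != set0 -> k \in M -> m \in M -> k != m ->
  p k M * Q M k m - p m M * Q M m k =
  (if 0 < delta p M k m then delta p M k m / p m [set k; m] * Q M k m else 0) +
  (if 0 < delta p M m k then - (delta p M m k / p k [set m; k]) * Q M m k else 0).
Proof.
move=> ne kM mM km.
have K := keyK _ _ _ ne kM mM km.
have [Hs [Hu1 [Hu2 _]]] := pair_key _ _ km.
have [H1 _] := Hp _ ne.
move: (H1 k) (H1 m) => /andP[pk0 _] /andP[pm0 _].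
rewrite /delta (set2C k m).
set uk := p k [set k; m] in K Hs Hu1 Hu2 *.
set um := p m [set k; m] in K Hs Hu1 Hu2 *.
set pk := p k M in pk0 *. set pm := p m M in pm0 *.
set x := Q M k m in K *. set y := Q M m k in K *.
have Hsym : pm * uk - um * pk = - (pk * um - uk * pm) by ring.
rewrite Hsym oppr_gt0.
have [dpos|dneg|d0] := ltgtP 0 (pk * um - uk * pm).
- rewrite addr0.
  have um0 : um != 0.
    apply/eqP => um0; move: dpos; rewrite um0 mulr0.
    have -> : uk = 1 by rewrite -Hs um0 addr0.
    by rewrite mul1r sub0r oppr_gt0 ltNge pm0.
  have -> : (pk * um - uk * pm) / um * x = (pk * um * x - pm * (uk * x)) / um
    by field.
  by rewrite K; field.
- rewrite add0r.
  have uk0 : uk != 0.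
    apply/eqP => uk0; move: dneg; rewrite uk0 mul0r subr0.
    by rewrite ltNge mulr_ge0.
  have -> : - (- (pk * um - uk * pm) / uk) * y = (pk * (um * y) - pm * uk * y) / uk
    by field.
  by rewrite -K; field.
- rewrite addr0.
  have E : (pk * x - pm * y) * (uk + um) - (pk * um - uk * pm) * (x + y)
      = (pk + pm) * (uk * x - um * y) by ring.
  by rewrite Hs mulr1 -d0 mul0r subr0 K subrr mulr0 in E.
Qed.

End Aux.

Definition Aterm {X : finType} {R : realFieldType} (p : X -> {set X} -> R)
  (Q : {set X} -> X -> X -> R) (M : {set X}) (k m : X) : R :=
  if 0 < delta p M k m then delta p M k m / p m [set k; m] * Q M k m else 0.
Definition Bterm {X : finType} {R : realFieldType} (p : X -> {set X} -> R)
  (Q : {set X} -> X -> X -> R) (M : {set X}) (k m : X) : R :=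
  if 0 < delta p M m k then - (delta p M m k / p k [set m; k]) * Q M m k else 0.

Theorem lemmaA4 (X : finType) (R : realFieldType)
    (p : X -> {set X} -> R) (Q : {set X} -> X -> X -> R) :
  is_scf p -> QA Q ->
  (forall i j : X, i != j -> stationary p Q [set i; j]) ->
  forall M : {set X}, M != set0 ->
    (stationary p Q M <-> Dgamma_zero p Q M).
Proof.
move=> Hp HQ Hst M ne.
have L1 : forall k, k \in M ->
  \sum_(m in M) p m M * ((m == k)%:R - Q M m k) =
  \sum_(m in M | m != k) (p k M * Q M k m - p m M * Q M m k).
  move=> k kM.
  have [_ [HQd _]] := HQ _ ne.
  have [Hkk _] := HQd k kM.
  rewrite (bigD1 k) //= eqxx Hkk.
  rewrite [X in _ + X](eq_bigr (fun m => - (p m M * Q M m k))); last first.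
    by move=> m /andP[_ mk]; rewrite (negbTE mk) sub0r mulrN.
  rewrite GRing.sumrN sumrB -mulr_sumr.
  rewrite /=; ring.
have L3 : forall k, k \in M ->
  \sum_(m in M | m != k) (p k M * Q M k m - p m M * Q M m k) =
  \sum_(m in M | m != k) (Aterm p Q M k m + Bterm p Q M k m).
  move=> k kM; apply: eq_bigr => m /andP[mM mk].
  by rewrite (@pointwise X R p Q Hp HQ Hst M k m ne kM mM); [| rewrite eq_sym].
have L2 : forall k, k \in M ->
  \sum_(ij in Gset p M) Dmat p M k ij * gammav Q M ij =
  \sum_(m in M | m != k) (Aterm p Q M k m + Bterm p Q M k m).
  move=> k kM.
  rewrite big_mkcond /=.
  rewrite (eq_bigr (fun ij =>
     (if ij.1 == k then (if (ij.2 \in M) && (ij.2 != k) then Aterm p Q M k ij.2 else 0) else 0) +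
     (if ij.2 == k then (if (ij.1 \in M) && (ij.1 != k) then Bterm p Q M k ij.1 else 0) else 0))); last first.
    case=> i j _; rewrite /Gset inE /Dmat /gammav /Aterm /Bterm /=.
    case: (eqVneq i k) => [->|ik]; case: (eqVneq j k) => [->|jk].
    - have -> : delta p M k k = 0 by rewrite /delta mulrC subrr.
      by rewrite ltxx !andbF /= addr0.
    - rewrite kM /= addr0 andbT.
      by case: (j \in M) => //=; case: ifP.
      rewrite kM /= add0r andbT.
      by case: (i \in M) => //=; case: ifP.
    - rewrite /= addr0 mul0r.
      by case: ifP; rewrite ?mul0r.
  rewrite big_split /=.
  rewrite -(pair_bigA _ (fun i j => if i == k then (if (j \in M) && (j != k) then Aterm p Q M k j else 0) else 0)).
  rewrite -(pair_bigA _ (fun i j => if j == k then (if (i \in M) && (i != k) then Bterm p Q M k i else 0) else 0)).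
  set a := fun j => if (j \in M) && (j != k) then Aterm p Q M k j else 0.
  set b := fun i => if (i \in M) && (i != k) then Bterm p Q M k i else 0.
  have E1 : \sum_i \sum_j (if i == k then a j else 0) = \sum_j a j.
    rewrite (bigD1 k) //= eqxx [X in _ + X]big1 ?addr0 // => i ik.
    by rewrite big1 // => j _; rewrite (negbTE ik).
  have E2 : \sum_i \sum_j (if j == k then b i else 0) = \sum_i b i.
    apply: eq_bigr => i _.
    rewrite (bigD1 k) //= eqxx [X in _ + X]big1 ?addr0 // => j jk.
    by rewrite (negbTE jk).
  rewrite E1 E2 big_split /= /a /b -!big_mkcond //.
split=> H k kM.
- by rewrite L2 // -L3 // -L1 // H.
- by rewrite /stationary L1 // L3 // -L2 // H.
Qed.
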